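(* Let $G$ be an abelian group and $A\subseteq G$ a finite set with at least $2$ elements. Then, for each choice of sign, $$\sum_{s\neq 0} |A\pm A_s| \ge 2^{-1} |A|^6 \mathsf{E}_3(A)^{-1} \quad\text{and}\quad \sum_{s\neq 0} \sum_{t\neq 0} |A_s\pm A_t| \ge 4^{-1} |A|^8 \mathsf{E}_4(A)^{-1},$$ where the sums range over $s,t\in (A-A)\setminus\{0\}$. In particular, there exists $s\neq 0$ with $|A-A_s| \ge 2^{-1}|A|^6\mathsf{E}_3(A)^{-1}|A-A|^{-1}$, and there exist $s,t\neq 0$ with $|A_s-A_t| \ge 4^{-1}|A|^8\mathsf{E}_4(A)^{-1}|A-A|^{-2}$.
   Context: For finite $A\subseteq G$, $(A\circ A)(x)=|\{y: y\in A,\ y+x\in A\}|$; for $s\in G$, $A_s=A\cap(A-s)$. $\mathsf{E}_3(A)=\sum_s (A\circ A)(s)^3$ and $\mathsf{E}_4(A)=\sum_s (A\circ A)(s)^4$. $X\pm Y$ denotes $\{x\pm y: x\in X, y\in Y\}$. *)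

(* Defs.v *)
From HB Require Import structures.
From mathcomp Require Import all_boot all_order all_algebra.
From mathcomp Require Import finmap.
Set Implicit Arguments. Unset Strict Implicit. Unset Printing Implicit Defensive.
Import Order.TTheory GRing.Theory Num.Theory.
Local Open Scope fset_scope.
Local Open Scope ring_scope.

Section Defs.
Variable G : zmodType.
Implicit Types (A X Y : {fset G}) (s x : G).

Definition sumset X Y : {fset G} := [fset x + y | x in X, y in Y].
Definition diffset X Y : {fset G} := [fset x - y | x in X, y in Y].

Definition Ash A s : {fset G} := [fset y in A | y + s \in A].

Definition conv A x : nat := #|` Ash A x|.

(* E_3(A) = sum_s (A∘A)(s)^3 ; (A∘A)(s) = 0 outside A - A, so the sum
   over all s in G equals the finite sum over s in A - A. *)
Definition E3 A : nat := (\sum_(s <- diffset A A) conv A s ^ 3)%N.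
Definition E4 A : nat := (\sum_(s <- diffset A A) conv A s ^ 4)%N.

Definition nzdiff A : {fset G} := diffset A A `\ 0.
End Defs.

(* Main.v *)
Require Import Defs.
From HB Require Import structures.
From mathcomp Require Import all_boot all_order all_algebra.
From mathcomp Require Import finmap.
From mathcomp Require Import zify.
Import Order.TTheory GRing.Theory Num.Theory.
Local Open Scope fset_scope.
Local Open Scope ring_scope.

Section Grp.
Variable G : zmodType.
Lemma keyb (p q r t : G) : (p - q == r - t) = (p + t == r + q).
Proof. by rewrite subr_eq -(inj_eq (addIr t)) addrAC subrK. Qed.
Lemma kd (x y x' y' : G) : (x - y == x' - y') = (x' - x == y' - y).
Proof. by rewrite !keyb addrC eq_sym addrC. Qed.
Lemma ks (x y x' y' : G) : (x + y == x' + y') = (x' - x == y - y').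
Proof. by rewrite keyb eq_sym addrC [y + _]addrC. Qed.

Lemma eq_addsub (b s b' : G) : ((b + s) == b') = (s == (b' - b)).
Proof. by rewrite [RHS]eq_sym subr_eq addrC eq_sym. Qed.

End Grp.

Section Comb.
Variable G : zmodType.
Local Open Scope nat_scope.
Implicit Types (A B X Y D : {fset G}).
Lemma gCS (I : Type) (r : seq I) (c S e : I -> nat) :
  (forall i, c i ^ 2 <= S i * e i) ->
  (\sum_(i <- r) c i) ^ 2 <= (\sum_(i <- r) S i) * (\sum_(i <- r) e i).
Proof.
move=> H.
have key i j : 2 * (c i * c j) <= S i * e j + S j * e i.
  rewrite -(@leq_exp2r _ _ 2) //.
  apply: (@leq_trans (4 * (S i * e i) * (S j * e j))).
    have := leq_mul (H i) (H j). nia.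
  have -> : 4 * (S i * e i) * (S j * e j) = 4 * ((S i * e j) * (S j * e i)).
    by rewrite -mulnA; congr (_ * _); rewrite mulnACA [in RHS]mulnACA (mulnC (e j)).
  move: (S i * e j) (S j * e i) => a b; rewrite sqrnD; case: (leqP a b) => hab; [have := leq_mul (leq_subr a b) (leq_subr a b) | have := leq_mul (leq_subr b a) (leq_subr b a)]; nia.
have E1 (a b : I -> nat) : \sum_(i <- r) \sum_(j <- r) a i * b j = (\sum_(i <- r) a i) * (\sum_(i <- r) b i).
  by rewrite big_distrl; apply: eq_bigr => i _; rewrite big_distrr.
rewrite -(@leq_pmul2l 2) //.
rewrite expnS expn1 -E1 big_distrr /=.
apply: (@leq_trans (\sum_(i <- r) \sum_(j <- r) (S i * e j + S j * e i))).
  by apply: leq_sum => i _; rewrite big_distrr; apply: leq_sum => j _; apply: key.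
under eq_bigr do rewrite big_split /=.
rewrite big_split /= E1 exchange_big E1 /=.
nia.
Qed.


Lemma inAsh A s y : (y \in Ash A s) = (y \in A) && ((y + s)%R \in A).
Proof. by rewrite /Ash !inE. Qed.

Lemma Ash_sub A s : Ash A s `<=` A.
Proof. by apply/fsubsetP => y; rewrite inAsh => /andP[]. Qed.

Lemma in_diff X Y x y : x \in X -> y \in Y -> (x - y)%R \in diffset X Y.
Proof. by move=> hx hy; rewrite /diffset; apply: in_imfset2. Qed.

Lemma sum_sub X A (F : G -> nat) : X `<=` A ->
  \sum_(x <- X) F x = \sum_(a <- A) (a \in X) * F a.
Proof.
move=> sXA.
transitivity (\sum_(x <- X) (x \in X) * F x).
  by apply: eq_big_seq => x ->; rewrite mul1n.
apply: (big_fset_incl _ sXA (F := fun a => (a \in X) * F a)) => x _ /negbTE ->; by [].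
Qed.

Lemma sum_eq1 D w (f : G -> nat) : w \in D ->
  \sum_(s <- D) (s == w) * f s = f w.
Proof.
move=> wD; rewrite (big_fsetD1 w) //= eqxx mul1n big1_seq ?addn0 //.
by move=> s /andP[_]; rewrite in_fsetD1 => /andP[/negbTE -> _].
Qed.

Lemma sum_mem X a : \sum_(x <- X) (a == x) = (a \in X).
Proof.
case: (boolP (a \in X)) => ha.
  by rewrite /= -(@sum_eq1 X a (fun _ => 1) ha); apply: eq_bigr => x _; rewrite muln1 eq_sym.
by rewrite big1_seq // => x /andP[_ hx]; apply/eqP; rewrite eqb0; apply: contra ha => /eqP ->.
Qed.

Lemma card_Ash A s : #|` Ash A s| = \sum_(a <- A) ((a + s)%R \in A).
Proof.
rewrite card_fset_sum1 (@sum_sub _ _ _ (Ash_sub A s)); apply: eq_big_seq => a aA.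
by rewrite inAsh aA muln1.
Qed.


Lemma sumD_sq B A : B `<=` A ->
  \sum_(s <- diffset A A) #|` Ash B s| = #|` B| ^ 2.
Proof.
move=> sBA.
under eq_bigr => s _ do rewrite card_Ash; rewrite exchange_big /=.
transitivity (\sum_(b <- B) \sum_(b' <- B) 1).
  apply: eq_big_seq => b bB.
  under eq_bigr => s _ do rewrite -sum_mem.
  rewrite exchange_big /=; apply: eq_big_seq => b' b'B.
  rewrite -(@sum_eq1 (diffset A A) (b' - b)%R (fun _ => 1)); last first.
    by apply: in_diff; apply: (fsubsetP sBA).
  apply: eq_bigr => s _; rewrite muln1; congr (nat_of_bool _).
  by rewrite eq_addsub.
under eq_bigr do rewrite -card_fset_sum1.
by rewrite expnS expn1 {2}card_fset_sum1 big_distrl /=; apply: eq_bigr => *; rewrite mul1n.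
Qed.


Lemma mul_sums (I J : Type) (r : seq I) (r' : seq J) (a : I -> nat) (b : J -> nat) :
  (\sum_(i <- r) a i) * (\sum_(j <- r') b j) = \sum_(i <- r) \sum_(j <- r') a i * b j.
Proof. by rewrite big_distrl; apply: eq_bigr => i _; rewrite big_distrr. Qed.

Lemma CS_img (f : G -> G -> G) X Y :
  (#|` X| * #|` Y|) ^ 2 <= #|` [fset f x y | x in X, y in Y]| *
     \sum_(x <- X) \sum_(x' <- X) \sum_(y <- Y) \sum_(y' <- Y) (f x y == f x' y').
Proof.
set Z := [fset f x y | x in X, y in Y].
have h1 : \sum_(z <- Z) (\sum_(x <- X) \sum_(y <- Y) (f x y == z)) = #|` X| * #|` Y|.
  rewrite exchange_big /= [#|` X|]card_fset_sum1 big_distrl /=.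
  apply: eq_big_seq => x xX; rewrite mul1n exchange_big /= card_fset_sum1.
  apply: eq_big_seq => y yY; rewrite sum_mem.
  by rewrite /Z in_imfset2.
have h2 : \sum_(z <- Z) (\sum_(x <- X) \sum_(y <- Y) (f x y == z)) ^ 2 =
    \sum_(x <- X) \sum_(x' <- X) \sum_(y <- Y) \sum_(y' <- Y) (f x y == f x' y').
  transitivity (\sum_(z <- Z) \sum_(x <- X) \sum_(x' <- X) \sum_(y <- Y) \sum_(y' <- Y)
       ((f x y == z) * (f x' y' == z))).
    apply: eq_bigr => z _; rewrite expnS expn1 [LHS]mul_sums; apply: eq_bigr => x _.
    by apply: eq_bigr => x' _; rewrite [LHS]mul_sums.
  rewrite exchange_big; apply: eq_big_seq => x xX.
  rewrite exchange_big; apply: eq_big_seq => x' x'X.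
  rewrite exchange_big; apply: eq_big_seq => y yY.
  rewrite exchange_big; apply: eq_big_seq => y' y'Y.
  transitivity ((f x' y' == f x y) : nat); last by rewrite eq_sym.
  have := @sum_eq1 Z (f x y) (fun z => (f x' y' == z) : nat).
  rewrite /Z in_imfset2 // => /(_ isT) <-.
  by apply: eq_bigr => z _; rewrite eq_sym.
have := @gCS _ Z (fun z => \sum_(x <- X) \sum_(y <- Y) (f x y == z)) (fun _ => 1)
  (fun z => (\sum_(x <- X) \sum_(y <- Y) (f x y == z)) ^ 2) (fun z => eq_leq (esym (mul1n _))).
by rewrite h1 h2 -card_fset_sum1.
Qed.

Lemma decomp A X Y : X `<=` A -> Y `<=` A ->
  \sum_(u <- X) \sum_(x <- X) \sum_(v <- Y) \sum_(y <- Y) ((x - u)%R == (y - v)%R) =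
  \sum_(d <- diffset A A) #|` Ash X d| * #|` Ash Y d|.
Proof.
move=> sXA sYA.
transitivity (\sum_(d <- diffset A A) \sum_(u <- X) \sum_(x <- X) \sum_(v <- Y) \sum_(y <- Y)
   (((u + d)%R == x) * ((v + d)%R == y))); last first.
  apply: eq_bigr => d _; rewrite !card_Ash mul_sums; apply: eq_bigr => u _.
  rewrite -sum_mem; under [RHS]eq_bigr do rewrite big_distrl.
  rewrite [RHS]exchange_big; apply: eq_bigr => x _.
  by apply: eq_bigr => v _; rewrite -sum_mem big_distrr.
symmetry.
rewrite exchange_big; apply: eq_big_seq => u uX.
rewrite exchange_big; apply: eq_big_seq => x xX.
rewrite exchange_big; apply: eq_big_seq => v vY.
rewrite exchange_big; apply: eq_big_seq => y yY.
under eq_bigr => d _ do rewrite eq_addsub.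
rewrite (@sum_eq1 _ _ (fun d => ((v + d)%R == y) : nat)).
  by rewrite eq_addsub.
by apply: in_diff; apply: (fsubsetP sXA).
Qed.

Lemma Ash_swap A s d : Ash (Ash A s) d = Ash (Ash A d) s.
Proof.
apply/fsetP => y; rewrite !inAsh.
by rewrite (addrAC y d s); case: (y \in A); case: ((y + s)%R \in A); case: ((y + d)%R \in A).
Qed.

Lemma Ash0 A : Ash A 0%R = A.
Proof. by apply/fsetP => y; rewrite inAsh addr0 andbb. Qed.


Lemma zero_in_D A : (0 < #|` A|) -> (0%R : G) \in diffset A A.
Proof.
rewrite cardfs_gt0 => /fset0Pn [a aA].
by rewrite -(subrr a); apply: in_diff.
Qed.

Lemma sum_nz_B A B : (0 < #|` A|) -> B `<=` A ->
  \sum_(s <- nzdiff A) #|` Ash B s| = #|` B| ^ 2 - #|` B|.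
Proof.
move=> A0 sBA; rewrite -(@sumD_sq _ _ sBA) [in RHS](big_fsetD1 0%R) ?zero_in_D //= Ash0.
by rewrite /nzdiff addKn.
Qed.

Lemma c_le A d : #|` Ash A d| <= #|` A|.
Proof. exact: fsubset_leq_card (Ash_sub A d). Qed.

Lemma F1d A s :
  (#|` A| * #|` Ash A s|) ^ 2 <= #|` diffset A (Ash A s)| *
     \sum_(d <- diffset A A) #|` Ash A d| * #|` Ash (Ash A d) s|.
Proof.
apply: (leq_trans (CS_img (fun x y => (x - y)%R) A (Ash A s))).
rewrite leq_eqVlt; apply/orP; left; apply/eqP; congr (_ * _).
rewrite [RHS](eq_bigr (fun d => #|` Ash A d| * #|` Ash (Ash A s) d|)); last by move=> d _; rewrite Ash_swap.
rewrite -(@decomp A _ _ (fsubset_refl A) (Ash_sub A s)).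
apply: eq_bigr => x _; apply: eq_bigr => x' _; apply: eq_bigr => y _; apply: eq_bigr => y' _.
by rewrite (@kd _ x y x' y').
Qed.

Lemma F1s A s :
  (#|` A| * #|` Ash A s|) ^ 2 <= #|` sumset A (Ash A s)| *
     \sum_(d <- diffset A A) #|` Ash A d| * #|` Ash (Ash A d) s|.
Proof.
apply: (leq_trans (CS_img (fun x y => (x + y)%R) A (Ash A s))).
rewrite leq_eqVlt; apply/orP; left; apply/eqP; congr (_ * _).
rewrite [RHS](eq_bigr (fun d => #|` Ash A d| * #|` Ash (Ash A s) d|)); last by move=> d _; rewrite Ash_swap.
rewrite -(@decomp A _ _ (fsubset_refl A) (Ash_sub A s)).
apply: eq_bigr => x _; apply: eq_bigr => x' _; rewrite exchange_big.
by apply: eq_bigr => y _; apply: eq_bigr => y' _; rewrite (@ks _ x y' x' y).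
Qed.

Lemma F3d A s t :
  (#|` Ash A s| * #|` Ash A t|) ^ 2 <= #|` diffset (Ash A s) (Ash A t)| *
     \sum_(d <- diffset A A) #|` Ash (Ash A d) s| * #|` Ash (Ash A d) t|.
Proof.
apply: (leq_trans (CS_img (fun x y => (x - y)%R) (Ash A s) (Ash A t))).
rewrite leq_eqVlt; apply/orP; left; apply/eqP; congr (_ * _).
rewrite [RHS](eq_bigr (fun d => #|` Ash (Ash A s) d| * #|` Ash (Ash A t) d|)); last by move=> d _; rewrite (Ash_swap A d s) (Ash_swap A d t).
rewrite -(@decomp A _ _ (Ash_sub A s) (Ash_sub A t)).
apply: eq_bigr => x _; apply: eq_bigr => x' _; apply: eq_bigr => y _; apply: eq_bigr => y' _.
by rewrite (@kd _ x y x' y').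
Qed.

Lemma F3s A s t :
  (#|` Ash A s| * #|` Ash A t|) ^ 2 <= #|` sumset (Ash A s) (Ash A t)| *
     \sum_(d <- diffset A A) #|` Ash (Ash A d) s| * #|` Ash (Ash A d) t|.
Proof.
apply: (leq_trans (CS_img (fun x y => (x + y)%R) (Ash A s) (Ash A t))).
rewrite leq_eqVlt; apply/orP; left; apply/eqP; congr (_ * _).
rewrite [RHS](eq_bigr (fun d => #|` Ash (Ash A s) d| * #|` Ash (Ash A t) d|)); last by move=> d _; rewrite (Ash_swap A d s) (Ash_swap A d t).
rewrite -(@decomp A _ _ (Ash_sub A s) (Ash_sub A t)).
apply: eq_bigr => x _; apply: eq_bigr => x' _; rewrite exchange_big.
by apply: eq_bigr => y _; apply: eq_bigr => y' _; rewrite (@ks _ x y' x' y).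
Qed.

Lemma sqn_sub k : k.+1 ^ 2 - k.+1 = k.+1 * k.
Proof. by rewrite -{2}(muln1 k.+1) expnS expn1 -mulnBr subn1. Qed.

Lemma ar1 n S W E : 2 <= n -> (n * (n ^ 2 - n)) ^ 2 <= S * W -> n * W <= (n - 1) * E ->
  n ^ 6 <= 2 * S * E.
Proof.
case: n => // k hn; rewrite sqn_sub subn1 /= => hg hw.
have h1 : k.+1 * (k.+1 * (k.+1 * k)) ^ 2 <= S * (k * E).
  apply: leq_trans (_ : S * (k.+1 * W) <= _); last by rewrite leq_mul2l hw orbT.
  rewrite mulnCA leq_mul2l hg orbT //.
have e1 : k.+1 * (k.+1 * (k.+1 * k)) ^ 2 = k * (k.+1 ^ 5 * k).
  by rewrite !expnS expn0 !muln1; lia.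
have h2 : k.+1 ^ 5 * k <= S * E.
  move: h1; rewrite e1 [X in _ <= X]mulnCA leq_pmul2l //; lia.
apply: leq_trans (_ : 2 * (k.+1 ^ 5 * k) <= _); last by rewrite -mulnA leq_mul2l h2 orbT.
rewrite expnSr mulnCA leq_mul2l; apply/orP; right; lia.
Qed.

Lemma ar2 n T V E : 2 <= n -> ((n ^ 2 - n) ^ 2) ^ 2 <= T * V -> n ^ 2 * V <= (n - 1) ^ 2 * E ->
  n ^ 8 <= 4 * T * E.
Proof.
case: n => // k hn; rewrite sqn_sub subn1 /= => hg hw.
have h1 : k.+1 ^ 2 * ((k.+1 * k) ^ 2) ^ 2 <= T * (k ^ 2 * E).
  apply: leq_trans (_ : T * (k.+1 ^ 2 * V) <= _); last by rewrite leq_mul2l hw orbT.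
  rewrite mulnCA leq_mul2l hg orbT //.
have e1 : k.+1 ^ 2 * ((k.+1 * k) ^ 2) ^ 2 = k ^ 2 * (k.+1 ^ 6 * k ^ 2).
  by rewrite !expnS expn0 !muln1; lia.
have h2 : k.+1 ^ 6 * k ^ 2 <= T * E.
  move: h1; rewrite e1 [X in _ <= X]mulnCA leq_pmul2l //; rewrite expn_gt0; apply/orP; left; lia.
apply: leq_trans (_ : 4 * (k.+1 ^ 6 * k ^ 2) <= _); last by rewrite -mulnA leq_mul2l h2 orbT.
rewrite mulnCA (_ : 8 = 6 + 2) // expnD leq_mul2l; apply/orP; right.
rewrite !expnS expn0 !muln1; nia.
Qed.

Lemma termw c n : c <= n -> n * (c * (c ^ 2 - c)) <= (n - 1) * c ^ 3.
Proof.
case: c => [|b]; first by rewrite !mul0n muln0.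
case: n => // m hc; rewrite sqn_sub subn1 /=.
have h : b.+1 * b.+1 * b <= b.+1 * b.+1 * m by rewrite leq_mul2l; apply/orP; right.
rewrite !expnS expn0 !muln1; nia.
Qed.
Lemma termw2 c n : c <= n -> n ^ 2 * (c ^ 2 - c) ^ 2 <= (n - 1) ^ 2 * c ^ 4.
Proof.
case: c => [|b]; first by rewrite (_ : 0 ^ 2 - 0 = 0) // exp0n // muln0.
case: n => // m hc; rewrite sqn_sub subn1 /=.
have h : m.+1 * b <= m * b.+1 by nia.
have := leq_mul h h.
have -> : (m.+1 ^ 2 * (b.+1 * b) ^ 2) = b.+1 ^ 2 * ((m.+1 * b) * (m.+1 * b)) by rewrite !expnS expn0 !muln1; lia.
have -> : (m ^ 2 * b.+1 ^ 4) = b.+1 ^ 2 * ((m * b.+1) * (m * b.+1)) by rewrite !expnS expn0 !muln1; lia.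
by move=> h2; rewrite leq_mul2l h2 orbT.
Qed.

Lemma sum_e A : 0 < #|` A| ->
  \sum_(s <- nzdiff A) \sum_(d <- diffset A A) #|` Ash A d| * #|` Ash (Ash A d) s| =
  \sum_(d <- diffset A A) #|` Ash A d| * (#|` Ash A d| ^ 2 - #|` Ash A d|).
Proof.
move=> A0; rewrite exchange_big; apply: eq_bigr => d _.
by rewrite -big_distrr (@sum_nz_B A) // Ash_sub.
Qed.

Lemma part1 A (hA : 2 <= #|` A|) (X : G -> {fset G})
  (hX : forall s, (#|` A| * #|` Ash A s|) ^ 2 <= #|` X s| *
     \sum_(d <- diffset A A) #|` Ash A d| * #|` Ash (Ash A d) s|) :
  #|` A| ^ 6 <= 2 * (\sum_(s <- nzdiff A) #|` X s|) * E3 A.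
Proof.
have A0 : 0 < #|` A| by apply: leq_trans hA.
apply: (@ar1 _ _ (\sum_(d <- diffset A A) #|` Ash A d| * (#|` Ash A d| ^ 2 - #|` Ash A d|)) _ hA).
  have := @gCS _ (nzdiff A) (fun s => #|` A| * #|` Ash A s|) (fun s => #|` X s|) _ hX.
  by rewrite -big_distrr (@sum_nz_B A) ?fsubset_refl // sum_e.
rewrite /E3 /conv !big_distrr; apply: leq_sum => d _.
exact: termw (c_le A d).
Qed.

Lemma sum_e2 A : 0 < #|` A| ->
  \sum_(s <- nzdiff A) \sum_(t <- nzdiff A) \sum_(d <- diffset A A)
     #|` Ash (Ash A d) s| * #|` Ash (Ash A d) t| =
  \sum_(d <- diffset A A) (#|` Ash A d| ^ 2 - #|` Ash A d|) ^ 2.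
Proof.
move=> A0.
transitivity (\sum_(s <- nzdiff A) \sum_(d <- diffset A A) \sum_(t <- nzdiff A)
     #|` Ash (Ash A d) s| * #|` Ash (Ash A d) t|).
  by apply: eq_bigr => s _; rewrite exchange_big.
rewrite exchange_big; apply: eq_bigr => d _.
by rewrite -mul_sums (@sum_nz_B A) // ?Ash_sub // expnS expn1.
Qed.

Lemma part3 A (hA : 2 <= #|` A|) (X : G -> G -> {fset G})
  (hX : forall s t, (#|` Ash A s| * #|` Ash A t|) ^ 2 <= #|` X s t| *
     \sum_(d <- diffset A A) #|` Ash (Ash A d) s| * #|` Ash (Ash A d) t|) :
  #|` A| ^ 8 <= 4 * (\sum_(s <- nzdiff A) \sum_(t <- nzdiff A) #|` X s t|) * E4 A.
Proof.
have A0 : 0 < #|` A| by apply: leq_trans hA.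
apply: (@ar2 _ _ (\sum_(d <- diffset A A) (#|` Ash A d| ^ 2 - #|` Ash A d|) ^ 2) _ hA).
  pose r := [seq (s, t) | s <- nzdiff A, t <- nzdiff A].
  have := @gCS _ r (fun p => #|` Ash A p.1| * #|` Ash A p.2|) (fun p => #|` X p.1 p.2|)
     (fun p => \sum_(d <- diffset A A) #|` Ash (Ash A d) p.1| * #|` Ash (Ash A d) p.2|)
     (fun p => hX p.1 p.2).
  rewrite /r !big_allpairs /= -sum_e2 //.
  by rewrite -mul_sums (@sum_nz_B A) ?fsubset_refl // expnS expn1.
rewrite /E4 /conv !big_distrr; apply: leq_sum => d _.
by apply: termw2; apply: c_le.
Qed.

End Comb.

Lemma pig (T : eqType) (r : seq T) (f : T -> nat) :
  r != [::] -> exists2 i, i \in r & (\sum_(j <- r) f j <= size r * f i)%N.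
Proof.
elim: r => // a r IH _.
case: r IH => [|b r] IH.
  by exists a; rewrite ?mem_seq1 // big_cons big_nil addn0 mul1n.
have [i ir hi] := IH isT.
case: (leqP (f a) (f i)) => hai.
  exists i; first by rewrite inE ir orbT.
  by rewrite big_cons /= mulSn leq_add.
exists a; first by rewrite inE eqxx.
rewrite big_cons /= mulSn leq_add2l (leq_trans hi) // leq_mul2l ltnW ?orbT //.
Qed.

Lemma to_rat (m N S E : nat) : (0 < m)%N -> (N <= m * S * E)%N ->
  (m%:R)^-1 * N%:R / E%:R <= (S%:R : rat).
Proof.
move=> m0 h.
case: (posnP E) => [->|E0]; first by rewrite invr0 mulr0.
rewrite ler_pdivrMr ?ltr0n // mulrC ler_pdivrMr ?ltr0n //.
by rewrite -!natrM ler_nat mulnC mulnA.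
Qed.

Lemma avg (X : rat) (S fi sz D : nat) : X <= S%:R -> (S <= sz * fi)%N -> (sz <= D)%N ->
  (0 < D)%N -> X / D%:R <= fi%:R.
Proof.
move=> hX hS hD D0; rewrite ler_pdivrMr ?ltr0n //.
apply: (le_trans hX); rewrite -natrM ler_nat; apply: (leq_trans hS); rewrite mulnC leq_mul2l hD orbT //.
Qed.

Theorem corollary3p2 (G : zmodType) (A : {fset G}) (hA : (2 <= #|` A|)%N) :
  [/\ (\sum_(s <- nzdiff A) (#|` diffset A (Ash A s)|)%:R : rat)
        >= 2^-1 * (#|` A|)%:R ^+ 6 / (E3 A)%:R,
      (\sum_(s <- nzdiff A) (#|` sumset A (Ash A s)|)%:R : rat)
        >= 2^-1 * (#|` A|)%:R ^+ 6 / (E3 A)%:R,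
      (\sum_(s <- nzdiff A) \sum_(t <- nzdiff A)
          (#|` diffset (Ash A s) (Ash A t)|)%:R : rat)
        >= 4^-1 * (#|` A|)%:R ^+ 8 / (E4 A)%:R
    & (\sum_(s <- nzdiff A) \sum_(t <- nzdiff A)
          (#|` sumset (Ash A s) (Ash A t)|)%:R : rat)
        >= 4^-1 * (#|` A|)%:R ^+ 8 / (E4 A)%:R] /\
  ((exists2 s, s \in nzdiff A &
          ((#|` diffset A (Ash A s)|)%:R
            >= 2^-1 * (#|` A|)%:R ^+ 6 / (E3 A)%:R / (#|` diffset A A|)%:R :> rat)) /\
     (exists s, exists t, [/\ s \in nzdiff A, t \in nzdiff A &
          ((#|` diffset (Ash A s) (Ash A t)|)%:R
            >= 4^-1 * (#|` A|)%:R ^+ 8 / (E4 A)%:R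
                 / (#|` diffset A A|)%:R ^+ 2 :> rat)])).
Proof.
have h1 := @part1 G A hA _ (@F1d G A).
have h2 := @part1 G A hA _ (@F1s G A).
have h3 := @part3 G A hA _ (@F3d G A).
have h4 := @part3 G A hA _ (@F3s G A).
have r1 := @to_rat _ _ _ _ (isT : (0 < 2)%N) h1.
have r3 := @to_rat _ _ _ _ (isT : (0 < 4)%N) h3.
rewrite natrX in r1; rewrite natrX in r3.
have nzD : (#|` nzdiff A| <= #|` diffset A A|)%N by apply: fsubset_leq_card; apply: fsubsetDl.
have A0 : (0 < #|` A|)%N by apply: leq_trans hA.
have nz0 : (nzdiff A : seq G) != [::].
  apply/eqP => e; move: h1; rewrite e big_nil muln0 mul0n leqn0 expn_eq0 /=.
  by rewrite -[_ == 0%N]negbK -lt0n A0.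
have D0 : (0 < #|` diffset A A|)%N by apply: leq_trans nzD; rewrite (_ : #|` nzdiff A| = size (nzdiff A : seq G)) // lt0n size_eq0.
split.
  split.
  - by rewrite -natr_sum; exact: r1.
  - by have := @to_rat _ _ _ _ (isT : (0 < 2)%N) h2; rewrite natrX -natr_sum.
  - by under eq_bigr do rewrite -natr_sum; rewrite -natr_sum; exact: r3.
  - have := @to_rat _ _ _ _ (isT : (0 < 4)%N) h4; rewrite natrX.
    by move=> h; under eq_bigr do rewrite -natr_sum; rewrite -natr_sum.
split.
  have [s sin hs] := @pig _ _ (fun s => #|` diffset A (Ash A s)|) nz0.
  exists s => //; exact: (@avg _ _ _ _ _ r1 hs nzD D0).
pose r := [seq (s, t) | s <- nzdiff A, t <- nzdiff A].
have r0 : r != [::].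
  by rewrite /r -size_eq0 size_allpairs muln_eq0 size_eq0 (negbTE nz0).
have [[s t] pin hp] := @pig _ _ (fun p => #|` diffset (Ash A p.1) (Ash A p.2)|) r0.
move: pin; rewrite /r => /allpairsP [[s' t'] /= [hs ht [e1 e2]]].
subst s' t'.
exists s, t; split => //.
rewrite -(natrX _ #|` diffset A A| 2).
have hp' : (\sum_(s0 <- nzdiff A) \sum_(t0 <- nzdiff A) #|` diffset (Ash A s0) (Ash A t0)|
   <= #|` nzdiff A| ^ 2 * #|` diffset (Ash A s) (Ash A t)|)%N.
  by move: hp; rewrite /r big_allpairs size_allpairs mulnn.
apply: (@avg _ _ _ _ _ r3 hp').
  by rewrite -!mulnn leq_mul.
by rewrite expn_gt0 D0.
Qed.
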